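(* Let $n\ge2$, $0\le m\le n(n-1)$ and $\nu=\lfloor \frac{m}{n}\rfloor$. Then $\mathbb G(n,m)$ is almost regular, with $n(\nu+1)-m$ vertices of in-degree $\nu$ and $m-n\nu$ vertices of in-degree $\nu+1$; more precisely, writing $d_i$ for the in-degree of vertex $i$, $(d_1,\dots,d_n)=(\nu,\dots,\nu,\nu+1,\dots,\nu+1)$, where $\nu$ appears $n(\nu+1)-m$ times followed by $\nu+1$ appearing $m-n\nu$ times.
   Context: For integers $n\ge2$ and $0\le m\le n(n-1)$, $\mathbb G(n,m)$ is the simple directed graph on vertex set $\{1,\dots,n\}$ whose arc set is $\{(\lceil \frac{i}{n-1}\rceil,\ n-((i-1)\bmod n)) : i=1,\dots,m\}$, where an arc $(j,k)$ goes from $j$ to $k$ and $a\bmod b\in\{0,\dots,b-1\}$; these $m$ pairs are pairwise distinct pairs of distinct vertices. A directed graph is almost regular if the difference between its largest and smallest in-degree is at most $1$. *)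

(* Defs.v *)
From mathcomp Require Import all_boot.
Set Implicit Arguments. Unset Strict Implicit. Unset Printing Implicit Defensive.

Definition ceil_div (a b : nat) : nat := (a + b.-1) %/ b.

(* The arc (as a pair (tail, head)) with index i of G(n,m). *)
Definition Garc (n i : nat) : nat * nat :=
  (ceil_div i (n - 1), n - ((i - 1) %% n)).

Definition Garcs (n m : nat) : seq (nat * nat) := [seq Garc n i | i <- iota 1 m].

Definition indeg (n m k : nat) : nat := count (fun a => a.2 == k) (Garcs n m).

Definition almost_regular (n m : nat) : Prop :=
  forall j k, j \in iota 1 n -> k \in iota 1 n -> indeg n m j <= indeg n m k + 1.

(* Main.v *)
Require Import Defs.
From mathcomp Require Import all_boot.
From mathcomp Require Import zify.

Definition fcnt (n k m : nat) := count (fun i => n - ((i - 1) %% n) == k) (iota 1 m).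

Lemma fcntS n k m : fcnt n k m.+1 = fcnt n k m + (n - m %% n == k).
Proof.
rewrite /fcnt -[m.+1]addn1 iotaD count_cat /= addn0.
rewrite add1n subn1 /=; lia.
Qed.

Lemma fcnt_val n k q r : 0 < k <= n -> r <= n ->
  fcnt n k (q * n + r) = q + (n - k < r).
Proof.
move=> hk.
elim: q r => [|q IHq] r.
  elim: r => [|r IHr] hr; first by [].
  rewrite mul0n add0n in IHr *.
  rewrite fcntS IHr ?(ltnW hr) // modn_small //.
  case: (n - r =P k) => [e|ne]; lia.
elim: r => [|r IHr] hr.
  rewrite mulSn addn0 addnC IHq //; lia.
rewrite addnS fcntS IHr ?(ltnW hr) // modnMDl modn_small //.
case: (n - r =P k) => [e|ne]; lia.
Qed.

Lemma indeg_val n m k : 0 < k <= n ->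
  indeg n m k = m %/ n + (n - k < m %% n).
Proof.
move=> hk.
have -> : indeg n m k = fcnt n k m by rewrite /indeg /Garcs count_map.
rewrite {1}(divn_eq m n) fcnt_val //.
have : 0 < n by lia.
move=> n0; rewrite ltnW // ltn_mod //.
Qed.

Lemma map_cst (T : Type) (s : seq T) (c : nat) : map (fun _ => c) s = nseq (size s) c.
Proof. by elim: s => //= a s ->. Qed.

Theorem proposition2 (n m : nat) (hn : 2 <= n) (hm : m <= n * (n - 1)) :
  let nu := m %/ n in
  [/\ almost_regular n m,
      count (fun k => indeg n m k == nu) (iota 1 n) = n * (nu + 1) - m,
      count (fun k => indeg n m k == nu + 1) (iota 1 n) = m - n * nu &
      [seq indeg n m k | k <- iota 1 n] =
        nseq (n * (nu + 1) - m) nu ++ nseq (m - n * nu) (nu + 1)].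
Proof.
move=> nu.
have n0 : 0 < n by lia.
have hr : m %% n < n by rewrite ltn_mod.
have hdm := divn_eq m n.
have e1 : n * (nu + 1) - m = n - m %% n by rewrite /nu; lia.
have e2 : m - n * nu = m %% n by rewrite /nu; lia.
have Hmap : [seq indeg n m k | k <- iota 1 n] =
    nseq (n * (nu + 1) - m) nu ++ nseq (m - n * nu) (nu + 1).
  rewrite e1 e2.
  have -> : iota 1 n = iota 1 (n - m %% n) ++ iota (1 + (n - m %% n)) (m %% n).
    by rewrite -iotaD; congr iota; lia.
  rewrite map_cat; congr (_ ++ _).
    have -> : [seq indeg n m k | k <- iota 1 (n - m %% n)] =
              map (fun _ => nu) (iota 1 (n - m %% n)).
      apply/eq_in_map => k; rewrite mem_iota => hk.
      rewrite indeg_val; last by lia.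
      have : (n - k < m %% n) = false by lia.
      by move=> ->; rewrite addn0.
    by rewrite map_cst size_iota.
  have -> : [seq indeg n m k | k <- iota (1 + (n - m %% n)) (m %% n)] =
            map (fun _ => nu + 1) (iota (1 + (n - m %% n)) (m %% n)).
    apply/eq_in_map => k; rewrite mem_iota => hk.
    rewrite indeg_val; last by lia.
    have : (n - k < m %% n) = true by lia.
    by move=> ->.
  by rewrite map_cst size_iota.
split => //.
- move=> j k; rewrite !mem_iota => hj hk.
  rewrite !indeg_val; [|lia|lia].
  case: (n - j < m %% n); case: (n - k < m %% n); rewrite /=; lia.
- rewrite -(count_map (indeg n m) (fun x => x == nu)) Hmap count_cat !count_nseq /=.
  rewrite eqxx; have -> : (nu + 1 == nu) = false by lia.
  lia.
- rewrite -(count_map (indeg n m) (fun x => x == nu + 1)) Hmap count_cat !count_nseq /=.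
  rewrite eqxx; have -> : (nu == nu + 1) = false by lia.
  lia.
Qed.
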